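(* Let $\phi\in X_1$, $t>0$ and $a\in(0,\tfrac12)$, and let $u$ be the global viscosity solution. Then: if $u_t(\cdot,t)\le0$ in $(0,a)$, then $u_x(\cdot,t)\le U^*_x$ in $(0,a)$; and if $u_t(\cdot,t)\ge0$ in $(0,a)$ and $u_x(0,t)=\infty$, then $u_x(\cdot,t)\ge U^*_x$ in $(0,a)$.
   Context: $p>2$. Problem (1D): $u_t-u_{xx}=|u_x|^p$ on $(0,1)\times(0,\infty)$, $u(0,t)=u(1,t)=0$, $u(\cdot,0)=\phi$. $X_1=\{\phi\in C^1([0,1]):\phi\ge0,\phi(0)=\phi(1)=0\}$. The global viscosity solution $u$ is continuous on $[0,1]\times[0,\infty)$, belongs to $C^{2,1}((0,1)\times(0,\infty))$ and solves the PDE pointwise there, but possibly $u(0,t)>0$. For $t>0$, $u_x(0,t):=\lim_{x\to0^+}u_x(x,t)\in\mathbb R\cup\{+\infty\}$ exists. $\alpha=\frac{p-2}{p-1}$, $c_p=(p-2)^{-1}(p-1)^{(p-2)/(p-1)}$, $U^*(x)=c_px^\alpha$ (so $U^*_x(x)=((p-1)x)^{-1/(p-1)}$). *)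

(* Defs.v *)
From Stdlib Require Import Reals.
From Coquelicot Require Import Coquelicot.
Open Scope R_scope.

(* Nonnegative real power a^q for a >= 0 (with 0^q = 0 for q > 0);
   Stdlib's Rpower is exp (q * ln a), which is wrong at a = 0. *)
Definition rpow (a q : R) : R := if Rle_dec a 0 then 0 else Rpower a q.

Definition d_x (u : R -> R -> R) (x t : R) : R := Derive (fun y => u y t) x.
Definition d_xx (u : R -> R -> R) (x t : R) : R := Derive (fun y => d_x u y t) x.
Definition d_t (u : R -> R -> R) (x t : R) : R := Derive (fun s => u x s) t.

Definition cont2_within (D : R -> R -> Prop) (f : R -> R -> R) (x t : R) : Prop :=
  forall eps : R, 0 < eps -> exists delta : R, 0 < delta /\
    forall y s : R, D y s -> Rabs (y - x) < delta -> Rabs (s - t) < delta ->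
      Rabs (f y s - f x t) < eps.

Definition Qint (y s : R) : Prop := 0 < y < 1 /\ 0 < s.
Definition Qclosed (y s : R) : Prop := 0 <= y <= 1 /\ 0 <= s.

Definition C21_interior (u : R -> R -> R) : Prop :=
  forall x t : R, Qint x t ->
    ex_derive (fun y => u y t) x /\
    ex_derive (fun y => d_x u y t) x /\
    ex_derive (fun s => u x s) t /\
    cont2_within Qint u x t /\
    cont2_within Qint (d_x u) x t /\
    cont2_within Qint (d_xx u) x t /\
    cont2_within Qint (d_t u) x t.

(* phi in C^1([0,1]) (one-sided derivatives at the endpoints, derivative
   continuous on [0,1]). *)
Definition C1_closed01 (phi : R -> R) : Prop :=
  exists g : R -> R, forall x : R, 0 <= x <= 1 ->
    filterlim (fun y => (phi y - phi x) / (y - x))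
      (within (fun y => 0 <= y <= 1 /\ y <> x) (locally x)) (locally (g x)) /\
    filterlim g (within (fun y => 0 <= y <= 1) (locally x)) (locally (g x)).

Definition in_X1 (phi : R -> R) : Prop :=
  C1_closed01 phi /\ (forall x, 0 <= x <= 1 -> 0 <= phi x) /\ phi 0 = 0 /\ phi 1 = 0.

Definition alpha_p (p : R) : R := (p - 2) / (p - 1).
Definition c_p (p : R) : R := / (p - 2) * Rpower (p - 1) ((p - 2) / (p - 1)).
Definition Ustar (p x : R) : R := c_p p * rpow x (alpha_p p).
Definition Ustar_x (p x : R) : R := Rpower ((p - 1) * x) (- / (p - 1)).

(* The properties of the global viscosity solution u of
     u_t - u_xx = |u_x|^p in (0,1)x(0,oo), u(0,t)=u(1,t)=0 (generalized sense),
     u(.,0) = phi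
   that are stated in the context: continuity on [0,1]x[0,oo), initial datum,
   C^{2,1} regularity in the interior, the PDE pointwise there, and existence
   of u_x(0,t) := lim_{x->0+} u_x(x,t) in R u {+oo} for every t > 0. *)
Definition global_visc_sol_props (p : R) (phi : R -> R) (u : R -> R -> R) : Prop :=
  (forall x t, Qclosed x t -> cont2_within Qclosed u x t) /\
  (forall x, 0 <= x <= 1 -> u x 0 = phi x) /\
  C21_interior u /\
  (forall x t, Qint x t ->
     d_t u x t - d_xx u x t = rpow (Rabs (d_x u x t)) p) /\
  (forall t, 0 < t -> exists l : Rbar, l <> m_infty /\
     filterlim (fun x => d_x u x t) (at_right 0) (Rbar_locally l)).

(* Main.v *)
Require Import Defs.
From Stdlib Require Import Reals Lra Classical.
From Coquelicot Require Import Coquelicot.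
Open Scope R_scope.

Lemma mono_le (f df : R -> R) (x y : R) : x <= y ->
  (forall z, x <= z <= y -> is_derive f z (df z) /\ 0 <= df z) -> f x <= f y.
Proof.
  intros Hxy H.
  destruct (MVT_gen f x y df) as [c [Hc Heq]].
  - intros z Hz. rewrite Rmin_left in Hz by lra. rewrite Rmax_right in Hz by lra.
    apply H; lra.
  - intros z Hz. rewrite Rmin_left in Hz by lra. rewrite Rmax_right in Hz by lra.
    apply continuity_pt_filterlim. apply (ex_derive_continuous (K:=R_AbsRing) (V:=R_NormedModule)).
    eexists. apply (proj1 (H z Hz)).
  - rewrite Rmin_left in Hc by lra. rewrite Rmax_right in Hc by lra.
    destruct (H c Hc) as [_ Hd]. nra.
Qed.

Lemma cont_eps (f : R -> R) x : ex_derive f x ->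
  forall eps, 0 < eps -> exists d, 0 < d /\ forall z, Rabs (z - x) < d -> Rabs (f z - f x) < eps.
Proof.
  intros Hd eps He.
  pose proof (continuity_pt_filterlim f x) as [_ C].
  specialize (C (ex_derive_continuous (K:=R_AbsRing) (V:=R_NormedModule) f x Hd)).
  destruct (C eps He) as [d [Hd0 Hdd]].
  exists d. split; auto. intros z Hz.
  destruct (Req_dec z x) as [->|Hne].
  - rewrite Rminus_eq_0, Rabs_R0; auto.
  - apply (Hdd z). split. split. exact I. auto. exact Hz.
Qed.

Lemma hderiv (v : R -> R) (q c x dv : R) : is_derive v x dv -> 0 < v x ->
  is_derive (fun y => exp (q * ln (v y)) - c * y) x (exp (q * ln (v x)) * (q * (dv / v x)) - c).
Proof.
  intros Hd Hp.
  auto_derive.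
  - split. eexists; exact Hd. split; auto.
  - replace (Derive (fun x : R => v x) x) with dv by (symmetry; apply (is_derive_unique v x dv Hd)). field. lra.
Qed.

Lemma exp_le_mono x y : x <= y -> exp x <= exp y.
Proof. intros [H|H]. left; apply exp_increasing; auto. subst; lra. Qed.
Lemma exp_le_inv' x y : exp x <= exp y -> x <= y.
Proof. intros H. destruct (Rle_lt_dec x y); auto. pose proof (exp_increasing y x r). lra. Qed.

Lemma sign_eq p v d : 0 < v ->
  exp((1-p)*ln v)*((1-p)*(d/v)) - (p-1) = (p-1)*(-(exp(-(p*ln v))*d) - 1).
Proof.
  intros Hv.
  replace ((1-p)*ln v) with (-(p*ln v) + ln v) by ring.
  rewrite exp_plus, exp_ln by auto. field. lra.
Qed.

Lemma exp_inv_prod a : exp (-a) * exp a = 1.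
Proof. rewrite <- exp_plus. replace (-a+a) with 0 by ring. apply exp_0. Qed.

Lemma sign1 p v d : 2 < p -> 0 < v -> d <= - exp (p * ln v) ->
  0 <= exp((1-p)*ln v)*((1-p)*(d/v)) - (p-1).
Proof.
  intros Hp Hv Hd. rewrite sign_eq by auto.
  pose proof (exp_inv_prod (p*ln v)). pose proof (exp_pos (-(p*ln v))).
  apply Rmult_le_pos. lra. nra.
Qed.

Lemma sign2 p v d : 2 < p -> 0 < v -> - exp (p * ln v) <= d ->
  exp((1-p)*ln v)*((1-p)*(d/v)) - (p-1) <= 0.
Proof.
  intros Hp Hv Hd. rewrite sign_eq by auto.
  pose proof (exp_inv_prod (p*ln v)). pose proof (exp_pos (-(p*ln v))).
  assert (-(exp (-(p*ln v))*d) - 1 <= 0) by nra. nra.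
Qed.

Lemma conv1 p x0 v0 : 2 < p -> 0 < x0 -> Ustar_x p x0 < v0 ->
  exp((1-p)*ln v0) < (p-1)*x0.
Proof.
  intros Hp Hx H. unfold Ustar_x, Rpower in H.
  assert (Hv0 : 0 < v0) by (pose proof (exp_pos (- / (p - 1) * ln ((p - 1) * x0))); lra).
  rewrite <- (exp_ln v0) in H by auto.
  apply exp_lt_inv in H.
  rewrite <- (exp_ln ((p-1)*x0)) by nra.
  apply exp_increasing.
  set (Lw := ln ((p-1)*x0)) in *.
  assert (Hm : (p-1) * (-/(p-1)*Lw) < (p-1) * ln v0) by (apply Rmult_lt_compat_l; lra).
  replace ((p-1) * (-/(p-1)*Lw)) with (-Lw) in Hm by (field; lra). lra.
Qed.

Lemma conv2 p x0 v0 : 2 < p -> 0 < x0 -> 0 < v0 -> exp((1-p)*ln v0) <= (p-1)*x0 ->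
  Ustar_x p x0 <= v0.
Proof.
  intros Hp Hx Hv0 H. unfold Ustar_x, Rpower.
  rewrite <- (exp_ln ((p-1)*x0)) in H by nra.
  apply exp_le_inv' in H.
  rewrite <- (exp_ln v0) by auto. apply exp_le_mono.
  set (Lw := ln ((p-1)*x0)) in *.
  assert (Hm : /(p-1) * (-Lw) <= /(p-1) * ((p-1) * ln v0)).
  { apply Rmult_le_compat_l. left; apply Rinv_0_lt_compat; lra. lra. }
  replace (/(p-1) * ((p-1) * ln v0)) with (ln v0) in Hm by (field; lra). lra.
Qed.

Lemma lowb p v K : 2 < p -> 0 < v -> 0 < K -> exp((1-p)*ln v) <= K -> exp (ln K / (1-p)) <= v.
Proof.
  intros Hp Hv HK H.
  rewrite <- (exp_ln K) in H by auto. apply exp_le_inv' in H.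
  rewrite <- (exp_ln v) by auto. apply exp_le_mono.
  assert (Hm : /(p-1) * (- ln K) <= /(p-1) * (-((1-p)*ln v))).
  { apply Rmult_le_compat_l. left; apply Rinv_0_lt_compat; lra. lra. }
  replace (/(p-1) * (-((1-p)*ln v))) with (ln v) in Hm by (field; lra).
  replace (ln K / (1-p)) with (/(p-1) * (- ln K)) by (field; lra). lra.
Qed.

Lemma upb p v eps : 2 < p -> 0 < eps -> exp (ln eps / (1-p)) < v -> exp((1-p)*ln v) < eps.
Proof.
  intros Hp He H.
  assert (Hv : 0 < v) by (pose proof (exp_pos (ln eps / (1-p))); lra).
  rewrite <- (exp_ln v) in H by auto. apply exp_lt_inv in H.
  rewrite <- (exp_ln eps) by auto. apply exp_increasing.
  assert (Hm : (p-1) * (ln eps / (1-p)) < (p-1) * ln v) by (apply Rmult_lt_compat_l; lra).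
  replace ((p-1) * (ln eps / (1-p))) with (- ln eps) in Hm by (field; lra). lra.
Qed.

Lemma opp_der (v : R -> R) x dv : is_derive v x dv -> is_derive (fun y => - v y) x (- dv).
Proof.
  intros Hd. auto_derive. eexists; exact Hd.
  replace (Derive (fun x : R => v x) x) with dv by (symmetry; apply (is_derive_unique v x dv Hd)). ring.
Qed.

Theorem lemma5p2 (p : R) (phi : R -> R) (u : R -> R -> R) (t a : R) :
  2 < p ->
  in_X1 phi ->
  global_visc_sol_props p phi u ->
  0 < t ->
  0 < a < / 2 ->
  ((forall x, 0 < x < a -> d_t u x t <= 0) ->
     forall x, 0 < x < a -> d_x u x t <= Ustar_x p x) /\
  ((forall x, 0 < x < a -> 0 <= d_t u x t) ->
   filterlim (fun x => d_x u x t) (at_right 0) (Rbar_locally p_infty) ->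
     forall x, 0 < x < a -> Ustar_x p x <= d_x u x t).
Proof.
  intros Hp _ [_ [_ [HC [HPDE _]]]] Ht [Ha0 Ha1].
  assert (Ha : a < 1) by lra.
  assert (Cv : forall x, 0<x<1 -> ex_derive (fun y => d_x u y t) x).
  { intros x Hx. destruct (HC x t (conj Hx Ht)) as [_ [H2 _]]. exact H2. }
  assert (Dv : forall x, 0<x<1 -> is_derive (fun y => d_x u y t) x (d_xx u x t)).
  { intros x Hx. apply Derive_correct. apply Cv; auto. }
  assert (PDE' : forall x, 0<x<1 -> d_xx u x t = d_t u x t - rpow (Rabs (d_x u x t)) p).
  { intros x Hx. rewrite <- (HPDE x t (conj Hx Ht)). ring. }
  assert (rnn : forall z, 0 <= rpow z p).
  { intros z. unfold rpow. destruct Rle_dec. lra. unfold Rpower. left; apply exp_pos. }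
  assert (rpos : forall z, 0 < z -> rpow (Rabs z) p = exp (p * ln z)).
  { intros z Hz. unfold rpow. rewrite Rabs_pos_eq by lra. destruct Rle_dec. lra. reflexivity. }
  set (h := fun y => exp((1-p)*ln(d_x u y t)) - (p-1)*y).
  assert (Hd : forall x, 0<x<1 -> 0 < d_x u x t -> is_derive h x
     (exp((1-p)*ln(d_x u x t))*((1-p)*(d_xx u x t / d_x u x t)) - (p-1))).
  { intros x Hx Hv. apply (hderiv (fun y => d_x u y t)); auto. }
  split.
  - intros Hneg x0 Hx0.
    destruct (Rle_lt_dec (d_x u x0 t) (Ustar_x p x0)) as [Hle|Hgt]; auto. exfalso.
    assert (Hv0 : 0 < d_x u x0 t).
    { unfold Ustar_x, Rpower in Hgt. pose proof (exp_pos (- / (p - 1) * ln ((p - 1) * x0))). lra. }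
    pose proof (conv1 p x0 _ Hp (proj1 Hx0) Hgt) as HE0.
    set (E0 := exp ((1 - p) * ln (d_x u x0 t))) in *.
    set (c := (p-1)*x0 - E0).
    assert (HE0p : 0 < E0) by apply exp_pos.
    set (x1 := c/(p-1)).
    assert (Hx1 : 0 < x1 < x0).
    { unfold x1, c. split. apply Rdiv_lt_0_compat; lra.
      apply Rmult_lt_reg_l with (p-1). lra. field_simplify; lra. }
    assert (Vm : forall z, x1 <= z <= x0 -> d_x u x0 t <= d_x u z t).
    { intros z Hz.
      assert (H := mono_le (fun y => - d_x u y t) (fun y => - d_xx u y t) z x0 (proj2 Hz)).
      cut ((fun y => - d_x u y t) z <= (fun y => - d_x u y t) x0). simpl; lra.
      apply H. intros w Hw. assert (0 < w < 1) by lra. split.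
      apply opp_der. apply Dv; auto.
      rewrite PDE' by auto. pose proof (rnn (Rabs (d_x u w t))). pose proof (Hneg w ltac:(lra)). lra. }
    assert (Hh : h x1 <= h x0).
    { apply (mono_le h (fun x => exp((1-p)*ln(d_x u x t))*((1-p)*(d_xx u x t / d_x u x t)) - (p-1))).
      lra. intros w Hw. assert (0 < w < 1) by lra.
      assert (0 < d_x u w t) by (pose proof (Vm w Hw); lra). split. apply Hd; auto.
      apply sign1; auto. rewrite PDE', rpos by auto. pose proof (Hneg w ltac:(lra)). lra. }
    unfold h in Hh. fold E0 in Hh.
    assert ((p-1)*x1 = c) by (unfold x1; field; lra).
    pose proof (exp_pos ((1 - p) * ln (d_x u x1 t))). unfold c in *. lra.
  - intros Hpos Hinf x0 Hx0.
    assert (Hx01 : 0 < x0 < 1) by lra.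
    assert (KC : forall eps, 0 < eps -> 0 < d_x u x0 t /\ h x0 < eps).
    { intros eps He.
      set (M := exp (ln eps / (1-p))).
      assert (HM : at_right 0 (fun x => M < d_x u x t)).
      { apply Hinf. exists M. intros x Hx; exact Hx. }
      destruct HM as [del Hdel].
      set (y := Rmin (del/2) (x0/2)).
      assert (Hy : 0 < y < x0).
      { unfold y. pose proof (cond_pos del). split.
        apply Rmin_glb_lt; lra. pose proof (Rmin_r (del/2) (x0/2)). lra. }
      assert (HvyM : M < d_x u y t).
      { apply Hdel. change (Rabs (y - 0) < del). rewrite Rminus_0_r, Rabs_pos_eq by lra.
        pose proof (Rmin_l (del/2) (x0/2)). pose proof (cond_pos del). unfold y in *. lra.
        lra. }
      assert (Hvy : 0 < d_x u y t) by (pose proof (exp_pos (ln eps / (1-p))); unfold M in *; lra).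
      pose proof (upb p _ eps Hp He HvyM) as HEy.
      set (Ey := exp ((1 - p) * ln (d_x u y t))) in *.
      assert (HEyp : 0 < Ey) by apply exp_pos.
      set (K := Ey + (p-1)*x0).
      assert (HK : 0 < K) by (unfold K; nra).
      set (m := exp (ln K / (1-p))).
      assert (Hm : 0 < m) by apply exp_pos.
      assert (Bnd : forall w, y <= w <= x0 -> (forall z, y <= z <= w -> 0 < d_x u z t) ->
                h w <= h y /\ m <= d_x u w t).
      { intros w Hw Hpz.
        assert (Hhw : h w <= h y).
        { cut ((fun z => - h z) y <= (fun z => - h z) w). simpl; lra.
          apply (mono_le _ (fun x => -(exp((1-p)*ln(d_x u x t))*((1-p)*(d_xx u x t / d_x u x t)) - (p-1)))).
          lra. intros z Hz. assert (0 < z < 1) by lra. split.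
          apply opp_der. apply Hd; auto.
          assert (Hs := sign2 p (d_x u z t) (d_xx u z t) Hp (Hpz z Hz)).
          assert (Hpre : - exp (p * ln (d_x u z t)) <= d_xx u z t).
          { rewrite PDE', rpos by (auto; apply Hpz; lra).
            pose proof (Hpos z ltac:(lra)). lra. }
          specialize (Hs Hpre). lra. }
        split; auto. apply lowb; auto. apply Hpz; lra.
        unfold h in Hhw. fold Ey in Hhw. unfold K. nra. }
      set (P := fun z => y <= z <= x0 /\ forall w, y <= w <= z -> 0 < d_x u w t).
      assert (Pb : bound P) by (exists x0; intros z [Hz _]; lra).
      assert (Pe : exists z, P z) by (exists y; split; [lra | intros w Hw; replace w with y by lra; auto]).
      destruct (completeness P Pb Pe) as [s [Hub Hleast]].
      assert (Hys : y <= s) by (apply Hub; destruct Pe as [_ _]; split; [lra | intros w Hw; replace w with y by lra; auto]).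
      assert (Hsx : s <= x0) by (apply Hleast; intros z [Hz _]; lra).
      assert (AllB : forall w, y <= w < s -> forall z, y <= z <= w -> 0 < d_x u z t).
      { intros w Hw.
        destruct (classic (exists z, P z /\ w < z)) as [[z [[_ Hz] Hwz]]|Hno].
        - intros z' Hz'. apply Hz. lra.
        - exfalso. assert (is_upper_bound P w).
          { intros z Pz. destruct (Rle_lt_dec z w); auto. exfalso; apply Hno; eauto. }
          pose proof (Hleast w H). lra. }
      assert (Vs : m <= d_x u s t).
      { destruct (Req_dec s y) as [Es|Nes].
        - rewrite Es. apply (Bnd y). lra. intros z Hz. replace z with y by lra. auto.
        - destruct (Rle_lt_dec m (d_x u s t)) as [ok|bad]; auto. exfalso.
          destruct (cont_eps _ s (Cv s ltac:(lra)) (m - d_x u s t) ltac:(lra)) as [d [Hd0 Hdd]].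
          set (w := Rmax y (s - d/2)).
          assert (Hw : y <= w < s).
          { unfold w. split. apply Rmax_l. apply Rmax_lub_lt; lra. }
          assert (Hws : Rabs (w - s) < d).
          { apply Rabs_def1. lra. unfold w. pose proof (Rmax_r y (s - d/2)). lra. }
          specialize (Hdd w Hws). apply Rabs_def2 in Hdd.
          destruct (Bnd w ltac:(lra) (AllB w Hw)) as [_ Hmw]. lra. }
      assert (Ps : P s).
      { split. lra. intros w Hw. destruct (Req_dec w s) as [->|Nw]. lra.
        apply (AllB w ltac:(lra)). lra. }
      assert (Es : s = x0).
      { destruct (Req_dec s x0) as [E|Ne]; auto. exfalso.
        destruct (cont_eps _ s (Cv s ltac:(lra)) (d_x u s t) ltac:(lra)) as [d [Hd0 Hdd]].
        set (z := Rmin x0 (s + d/2)).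
        assert (Hz : s < z <= x0).
        { unfold z. split. apply Rmin_glb_lt; lra. apply Rmin_l. }
        assert (Pz : P z).
        { split. lra. intros w Hw. destruct (Rle_lt_dec w s) as [Hle|Hlt].
          apply Ps; lra.
          assert (Rabs (w - s) < d).
          { apply Rabs_def1. unfold z in Hw. pose proof (Rmin_r x0 (s + d/2)). lra. lra. }
          specialize (Hdd w H). apply Rabs_def2 in Hdd. lra. }
        pose proof (Hub z Pz). lra. }
      rewrite Es in Ps. destruct Ps as [_ Pos].
      destruct (Bnd x0 ltac:(lra) Pos) as [Hh _].
      split. apply Pos; lra.
      unfold h at 2 in Hh. fold Ey in Hh. nra. }
    destruct (KC 1 ltac:(lra)) as [Hv0 _].
    apply conv2; auto. lra.
    destruct (Rle_lt_dec (exp ((1 - p) * ln (d_x u x0 t))) ((p - 1) * x0)) as [ok|bad]; auto.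
    exfalso. destruct (KC (exp ((1 - p) * ln (d_x u x0 t)) - (p - 1) * x0) ltac:(lra)) as [_ Hh].
    unfold h in Hh. lra.
Qed.
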